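(* For every integer $n\ge 0$ and every real number $x$, \[ \sum_{l=0}^{n}\frac{\binom{n}{l}E_{n-l}(x)}{n+l+1}=\sum_{l=0}^{n}(-1)^l\,\frac{E_{n-l}(1+x)}{n+l+1}\,\frac{\binom{n}{l}}{\binom{n+l}{l}} . \] In particular, for $x=0$, \[ \sum_{l=0}^{n}\frac{\binom{n}{l}E_{n-l}}{n+l+1}=(-1)^n\sum_{l=0}^{n}\frac{E_{n-l}}{n+l+1}\,\frac{\binom{n}{l}}{\binom{n+l}{l}} . \]
   Context: The Euler polynomials $E_n(x)$ are defined by the generating function $\frac{2}{e^t+1}e^{xt}=\sum_{n\ge0}E_n(x)\frac{t^n}{n!}$, and the Euler numbers are $E_n=E_n(0)$, i.e. $\frac{2}{e^t+1}=\sum_{n\ge 0}E_n\frac{t^n}{n!}$. *)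

(* Defs.v *)
From HB Require Import structures.
From mathcomp Require Import all_boot all_order all_algebra.
Set Implicit Arguments. Unset Strict Implicit. Unset Printing Implicit Defensive.
Import Order.TTheory GRing.Theory Num.Theory.
Local Open Scope ring_scope.

(* Comparing coefficients of t^n/n! in
     (e^t + 1) * sum_n E_n(x) t^n/n! = 2 e^{xt}
   gives  sum_{k=0}^n C(n,k) E_k(x) + E_n(x) = 2 x^n,  i.e.
     E_n(x) = x^n - 1/2 * sum_{k<n} C(n,k) E_k(x).
   euler_seq x n is the list [E_0(x); ...; E_n(x)]. *)
Fixpoint euler_seq (R : realFieldType) (x : R) (n : nat) : seq R :=
  match n with
  | 0 => [:: 1]
  | n'.+1 =>
      let s := euler_seq x n' in
      rcons s (x ^+ n'.+1 - 2^-1 * \sum_(k < n'.+1) 'C(n'.+1, k)%:R * s`_k)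
  end.

Definition euler_poly (R : realFieldType) (n : nat) (x : R) : R :=
  (euler_seq x n)`_n.

Definition euler_num (R : realFieldType) (n : nat) : R := euler_poly n 0.

(* Main.v *)
Require Import Defs.
From HB Require Import structures.
From mathcomp Require Import all_boot all_order all_algebra.
From mathcomp Require Import ring lra zify.
Set Implicit Arguments. Unset Strict Implicit. Unset Printing Implicit Defensive.
Import Order.TTheory GRing.Theory Num.Theory.
Local Open Scope ring_scope.

Section E.
Variable R : realFieldType.

Lemma es_size (x : R) n : size (euler_seq x n) = n.+1.
Proof. by elim: n => [|n IH] //=; rewrite size_rcons IH. Qed.

Lemma es_nth (x : R) n k : (k <= n)%N -> (euler_seq x n)`_k = euler_poly k x.
Proof.
elim: n k => [|n IH] k hk.
  by move: hk; rewrite leqn0 => /eqP ->.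
rewrite leq_eqVlt in hk; case/orP: hk => [/eqP ->|hk] //.
by rewrite /= nth_rcons es_size hk IH.
Qed.

Lemma ep_rec (x : R) n : euler_poly n x =
  x ^+ n - 2^-1 * \sum_(k < n) 'C(n, k)%:R * euler_poly k x.
Proof.
case: n => [|n]; first by rewrite /euler_poly /= big_ord0 mulr0 subr0 expr0.
rewrite {1}/euler_poly /= nth_rcons es_size ltnn eqxx.
congr (_ - _ * _); apply: eq_bigr => k _; rewrite es_nth //.
by rewrite -ltnS.
Qed.

Fixpoint EPs (n : nat) : seq {poly R} :=
  match n with
  | 0 => [:: 1]
  | m.+1 => let s := EPs m in
      rcons s ('X^(m.+1) - 2^-1 *: \sum_(k < m.+1) 'C(m.+1, k)%:R *: s`_k)
  end.
Definition EP n := (EPs n)`_n.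

Lemma eps_size n : size (EPs n) = n.+1.
Proof. by elim: n => [|n IH] //=; rewrite size_rcons IH. Qed.

Lemma eps_nth n k : (k <= n)%N -> (EPs n)`_k = EP k.
Proof.
elim: n k => [|n IH] k hk.
  by move: hk; rewrite leqn0 => /eqP ->.
rewrite leq_eqVlt in hk; case/orP: hk => [/eqP ->|hk] //.
by rewrite /= nth_rcons eps_size hk IH.
Qed.

Lemma EP_rec n : EP n = 'X^n - 2^-1 *: \sum_(k < n) 'C(n, k)%:R *: EP k.
Proof.
case: n => [|n]; first by rewrite /EP /= big_ord0 scaler0 subr0 expr0.
rewrite {1}/EP /= nth_rcons eps_size ltnn eqxx.
congr (_ - _ *: _); apply: eq_bigr => k _; rewrite eps_nth //.
by rewrite -ltnS.
Qed.

Lemma EP_horner n (y : R) : (EP n).[y] = euler_poly n y.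
Proof.
elim/ltn_ind: n => n IH.
rewrite EP_rec ep_rec hornerD hornerN hornerZ hornerXn horner_sum.
congr (_ - _ * _); apply: eq_bigr => k _.
by rewrite hornerZ IH.
Qed.

Lemma EP_deriv n : (EP n)^`() = n%:R *: EP n.-1.
Proof.
elim/ltn_ind: n => n IH.
rewrite EP_rec derivB derivXn derivZ raddf_sum.
case: n IH => [|n] IH.
  by rewrite big_ord0 scaler0 subr0 mulr0n scale0r.
rewrite big_ord_recl /= derivZ IH // !scale0r scaler0 add0r.
rewrite [EP n.+1.-1]EP_rec /= scalerBr -scaler_nat.
rewrite scalerA [_ * 2^-1]mulrC -scalerA.
congr (_ - _ *: _).
rewrite scaler_sumr; apply: eq_bigr => i _.
rewrite /bump /= add1n derivZ IH ?ltnS // !scalerA /=.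
congr (_ *: _).
by rewrite -natrM mulnC -mul_bin_diag natrM mulrC.
Qed.


Definition J (p : {poly R}) := \sum_(0 <= i < size p) p`_i / (i.+1)%:R.

Lemma J_bound (p : {poly R}) N : (size p <= N)%N -> J p = \sum_(0 <= i < N) p`_i / (i.+1)%:R.
Proof.
move=> hN; rewrite /J (big_cat_nat (leq0n _) hN) /=.
rewrite [X in _ = _ + X]big1_seq ?addr0 // => i /andP[_].
by rewrite mem_index_iota => /andP[h _]; rewrite nth_default // mul0r.
Qed.

Lemma JB (p q : {poly R}) : J (p - q) = J p - J q.
Proof.
set N := maxn (size p) (size q).
have hp : (size p <= N)%N by rewrite leq_maxl.
have hq : (size q <= N)%N by rewrite leq_maxr.
have hpq : (size (p - q)%R <= N)%N by rewrite (leq_trans (size_polyD _ _)) // size_polyN.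
rewrite (J_bound hp) (J_bound hq) (J_bound hpq) -sumrB.
by apply: eq_bigr => i _; rewrite coefB mulrBl.
Qed.

Lemma JZ c (p : {poly R}) : J (c *: p) = c * J p.
Proof.
have h : (size (c *: p)%R <= size p)%N by apply: size_scale_leq.
rewrite (J_bound h) /J mulr_sumr; apply: eq_bigr => i _.
by rewrite coefZ mulrA.
Qed.

Lemma J_deriv (p : {poly R}) : J p^`() = p.[1] - p.[0].
Proof.
have h : (size p^`() <= (size p).-1)%N.
  apply/leq_sizeP => j hj; rewrite coef_deriv nth_default ?mul0rn //.
  move: hj; case: (size p) => // k /=; by lia.
rewrite (J_bound h) horner_coef horner_coef0.
case E: (size p) => [|n].
  by rewrite big_ord0 big_geq // nth_default ?E // subrr.
rewrite big_ord_recl /= expr0 mulr1 [p`_0 + _]addrC addrK big_mkord.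
apply: eq_bigr => i _.
by rewrite coef_deriv expr1n mulr1 /bump /= add1n -[p`_ _ *+ _]mulr_natr mulfK // pnatr_eq0.
Qed.

Lemma JXn n (p : {poly R}) N : (size p <= N)%N ->
  J ('X^n * p) = \sum_(0 <= j < N) p`_j / (n + j).+1%:R.
Proof.
move=> hN.
have h : (size ('X^n * p)%R <= n + N)%N.
  apply/leq_sizeP => j hj; rewrite coefXnM; case: ifP => // _.
  rewrite nth_default //.
  apply: leq_trans hN _; move: hj; clear; by lia.
rewrite (J_bound h) (big_cat_nat (leq0n n) (leq_addr _ _)) /=.
rewrite big1_seq ?add0r; last first.
  by move=> i /andP[_]; rewrite mem_index_iota => /andP[_ hi]; rewrite coefXnM hi mul0r.
rewrite -{1}[n]add0n big_addn addKn; apply: eq_bigr => j _.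
by rewrite coefXnM ltnNge leq_addl /= addnK addnC.
Qed.

Definition F (x : R) m := EP m \Po ('X + x%:P).

Lemma F_deriv x m : (F x m)^`() = m%:R *: F x m.-1.
Proof.
rewrite /F deriv_comp EP_deriv derivD derivX derivC addr0 mulr1.
by rewrite comp_polyZ.
Qed.

Lemma F_horner x m t : (F x m).[t] = euler_poly m (t + x).
Proof. by rewrite /F horner_comp hornerD hornerX hornerC EP_horner. Qed.

Lemma F_coef x n l : (F x n)`_l = 'C(n, l)%:R * euler_poly (n - l) x.
Proof.
elim: n l => [|n IH] l.
  case: l => [|l].
    by rewrite -horner_coef0 F_horner add0r bin0 mul1r.
  have : ((F x 0)^`())`_l = 0 by rewrite F_deriv scale0r coef0.
  rewrite coef_deriv => /eqP; rewrite mulrn_eq0 /= => /eqP ->.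
  by rewrite bin0n mul0r.
case: l => [|l].
  by rewrite -horner_coef0 F_horner add0r bin0 mul1r subn0.
have : ((F x n.+1)^`())`_l = (n.+1%:R *: F x n)`_l by rewrite F_deriv.
rewrite coef_deriv coefZ IH subSS => /(congr1 (fun z => z / l.+1%:R)).
rewrite -[X in X / _ = _ -> _]mulr_natr mulfK ?pnatr_eq0 // => ->.
rewrite mulrA -natrM (mul_bin_diag n.+1 l) natrM /=.
by field; rewrite addrC natr1 pnatr_eq0.
Qed.

Lemma F_size x n : (size (F x n) <= n.+1)%N.
Proof.
apply/leq_sizeP => j hj; rewrite F_coef bin_small ?mul0r //.
Qed.

Definition D x n l := J ('X^(n + l) * F x (n - l)).
Definition dd n l : R := 'C(n, l)%:R / 'C(n + l, l)%:R.

Lemma D_step x n l : D x n l =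
  euler_poly (n - l) (1 + x) / (n + l + 1)%:R
  - (n - l)%:R / (n + l + 1)%:R * D x n l.+1.
Proof.
rewrite {1}/D.
set c : R := ((n + l).+1%:R)^-1.
set g : {poly R} := c *: 'X^((n + l).+1).
have hc : (n + l).+1%:R * c = 1 by rewrite /c mulfV // pnatr_eq0.
have hg : g^`() = 'X^(n + l).
  by rewrite /g derivZ derivXn /= -scaler_nat scalerA mulrC hc scale1r.
have -> : 'X^(n + l) * F x (n - l) = (F x (n - l) * g)^`() - (F x (n - l))^`() * g.
  by rewrite derivM hg addrC addKr mulrC.
rewrite JB J_deriv !hornerM F_horner /g !hornerZ !hornerXn expr0n /=.
rewrite mulr0 mulr0 subr0 expr1n mulr1 F_deriv -subnS -scalerAl -scalerAr JZ JZ mulrA.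
by rewrite /D addn1 addnS [F x _ * _]mulrC.
Qed.

Lemma dd_step n k : dd n k.+1 = dd n k * ((n - k)%:R / (n + k + 1)%:R).
Proof.
rewrite /dd.
have h1 : (k.+1 * 'C(n, k.+1) = (n - k) * 'C(n, k))%N by rewrite mul_bin_left.
have h2 : ((n + k + 1) * 'C(n + k, k) = k.+1 * 'C(n + k.+1, k.+1))%N.
  by rewrite addn1 -(mul_bin_diag (n + k.+1) k) addnS.
have c1 : 'C(n + k, k)%:R != 0 :> R by rewrite pnatr_eq0 -lt0n bin_gt0 leq_addl.
have c2 : 'C(n + k.+1, k.+1)%:R != 0 :> R by rewrite pnatr_eq0 -lt0n bin_gt0 leq_addl.
have c3 : k.+1%:R != 0 :> R by rewrite pnatr_eq0.
have c4 : (n + k + 1)%:R != 0 :> R by rewrite pnatr_eq0 addn1.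
have e1 : 'C(n, k.+1)%:R = (n - k)%:R * 'C(n, k)%:R / k.+1%:R :> R.
  by rewrite -natrM -h1 natrM mulrC mulKf.
have e2 : 'C(n + k.+1, k.+1)%:R = (n + k + 1)%:R * 'C(n + k, k)%:R / k.+1%:R :> R.
  by rewrite -natrM h2 natrM mulrC mulKf.
rewrite e1 e2; field.
by rewrite c1 -natrD natr1 pnatr_eq0 /= addrC natr1 pnatr_eq0.
Qed.

Lemma D_iter x n k : D x n 0 =
  \sum_(l < k) (-1) ^+ l * (euler_poly (n - l) (1 + x) / (n + l + 1)%:R) * dd n l
  + (-1) ^+ k * dd n k * D x n k.
Proof.
elim: k => [|k IH].
  by rewrite big_ord0 add0r expr0 mul1r /dd addn0 !bin0 divr1 mul1r.
rewrite IH big_ord_recr /= -addrA; congr (_ + _).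
rewrite D_step dd_step exprS; ring.
Qed.

Lemma part1 n (x : R) :
    \sum_(l < n.+1) 'C(n, l)%:R * euler_poly (n - l) x / (n + l + 1)%:R
    = \sum_(l < n.+1) (-1) ^+ l * (euler_poly (n - l) (1 + x) / (n + l + 1)%:R)
                      * ('C(n, l)%:R / 'C(n + l, l)%:R).
Proof.
have := D_iter x n n.+1.
rewrite {2}/dd bin_small ?ltnSn // mul0r mulr0 mul0r addr0 => <-.
rewrite /D addn0 subn0 (JXn _ (F_size x n)) big_mkord.
apply: eq_bigr => l _; by rewrite F_coef addn1.
Qed.

Lemma shift_rel m (y : R) : euler_poly m (y + 1) + euler_poly m y = 2 * y ^+ m.
Proof.
have -> : euler_poly m (y + 1) = \sum_(k < m.+1) 'C(m, k)%:R * euler_poly k y.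
  rewrite addrC -F_horner (horner_coef_wide _ (F_size y m)).
  rewrite (reindex_inj rev_ord_inj) /=; apply: eq_bigr => l _.
  rewrite expr1n mulr1 F_coef subSS subKn; last by rewrite -ltnS.
  by rewrite bin_sub // -ltnS.
rewrite big_ord_recr /= binn mul1r.
have h := ep_rec y m.
by rewrite h; field.
Qed.

Lemma uniq_zero (p : {poly R}) : (forall y, p.[y + 1] + p.[y] = 0) -> p = 0.
Proof.
move=> hp.
have h2 : forall k, p.[(k.*2)%:R] = p.[0].
  elim=> [|k IH] //.
  have e : (k.+1.*2)%:R = (k.*2)%:R + 1 + 1 :> R by rewrite doubleS !mulrSr.
  have a1 := hp ((k.*2)%:R + 1). have a2 := hp ((k.*2)%:R).
  rewrite e; lra.
set q := p - (p.[0])%:P.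
have hq : q = 0.
  apply/eqP; apply/negPn/negP => nz.
  have := max_poly_roots nz (rs := [seq (k.*2)%:R | k <- iota 0 (size q)]).
  rewrite size_map size_iota ltnn => H; apply: notF; apply: H.
    apply/allP => z /mapP [k _ ->].
    by rewrite /root /q hornerD hornerN hornerC h2 subrr.
  rewrite map_inj_uniq ?iota_uniq //.
  by move=> a b /eqP; rewrite eqr_nat => /eqP/double_inj.
have ep : p = (p.[0])%:P by apply/eqP; rewrite -subr_eq0 -/q hq.
move: ep (hp 0); set c := p.[0] => ep; rewrite ep !hornerC => h.
have -> : c = 0 by lra.
by [].
Qed.

Lemma sym1 m : euler_poly m (1 : R) = (-1) ^+ m * euler_poly m 0.
Proof.
set p : {poly R} := EP m - (-1) ^+ m *: (EP m \Po (1 - 'X)).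
have hpy : forall y, p.[y] = euler_poly m y - (-1) ^+ m * euler_poly m (1 - y).
  move=> y; rewrite /p hornerD hornerN hornerZ horner_comp hornerD hornerN hornerX hornerC !EP_horner.
  by [].
have hp0 : p = 0.
  apply: uniq_zero => y; rewrite !hpy.
  have e : 1 - (y + 1) = - y by ring.
  have e' : 1 - y = - y + 1 by ring.
  rewrite e e'.
  have h2 := shift_rel m y. have h1 := shift_rel m (- y).
  rewrite exprNn in h1.
  have ss : (-1) ^+ m * (-1) ^+ m = 1 :> R.
    by rewrite -exprD -signr_odd oddD addbb.
  transitivity ((euler_poly m (y + 1) + euler_poly m y)
     - (-1) ^+ m * (euler_poly m (- y + 1) + euler_poly m (- y))); first ring.
  rewrite h2 h1.
  transitivity (2 * y ^+ m - 2 * ((-1) ^+ m * (-1) ^+ m) * y ^+ m); first ring.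
  by rewrite ss; ring.
have := hpy 0; rewrite hp0 horner0 subr0 => /eqP; rewrite eq_sym subr_eq0 => /eqP ->.
by rewrite signrMK.
Qed.
End E.

Theorem theorem1 (R : realFieldType) :
  (forall (n : nat) (x : R),
    \sum_(l < n.+1) 'C(n, l)%:R * euler_poly (n - l) x / (n + l + 1)%:R
    = \sum_(l < n.+1) (-1) ^+ l * (euler_poly (n - l) (1 + x) / (n + l + 1)%:R)
                      * ('C(n, l)%:R / 'C(n + l, l)%:R))
  /\
  (forall n : nat,
    \sum_(l < n.+1) 'C(n, l)%:R * euler_num R (n - l) / (n + l + 1)%:R
    = (-1) ^+ n * \sum_(l < n.+1) (euler_num R (n - l) / (n + l + 1)%:R)
                      * ('C(n, l)%:R / 'C(n + l, l)%:R)).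
Proof.
split; first exact: part1.
move=> n; rewrite /euler_num part1 mulr_sumr; apply: eq_bigr => l _.
rewrite addr0 sym1 !mulrA; congr (_ * _ * _).
have hl : (l <= n)%N by rewrite -ltnS.
by rewrite -exprD subnKC.
Qed.
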